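(* Let $A \in \mathbb{R}^{p \times n}$ have all entries nonnegative, let $1 \leq k \leq p$, and let $\widetilde{x} \in \{0,1\}^n$. Then for all $x \in \{0,1\}^n$, $$Q_k(Ax) \geq Q_k(A\widetilde{x})\left(\sum_{i=1}^n \widetilde{x}_i x_i - \sum_{i=1}^n \widetilde{x}_i + 1\right),$$ and this inequality holds with equality for $x = \widetilde{x}$.
   Context: For $y \in \mathbb{R}^p$ and an integer $1 \leq k \leq p$, $Q_k(y)$ denotes the $k$-th largest entry of $y$ (entries counted with multiplicity). *)

(* Defs.v *)
From mathcomp Require Import all_boot all_order all_algebra.
Set Implicit Arguments. Unset Strict Implicit. Unset Printing Implicit Defensive.
Import Order.TTheory GRing.Theory Num.Theory.
Local Open Scope ring_scope.

(* Q_k(y): the k-th largest entry of the column vector y in R^p (entries counted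
   with multiplicity), k numbered from 1: sort entries in nonincreasing order and
   take the element at position k-1. *)
Definition Qk (R : realFieldType) (p : nat) (k : nat) (y : 'cV[R]_p) : R :=
  nth 0 (sort (fun a b : R => b <= a) [seq y i 0 | i <- enum 'I_p]) k.-1.

Definition is01 (R : realFieldType) (n : nat) (x : 'cV[R]_n) : Prop :=
  forall i : 'I_n, x i 0 = 0 \/ x i 0 = 1.

(* Main.v *)
Require Import Defs.
From mathcomp Require Import all_boot all_order all_algebra.
From mathcomp Require Import zify ring lra.
Import Order.TTheory GRing.Theory Num.Theory.
Local Open Scope ring_scope.

Section S.
Variable R : realFieldType.
Let ge := fun a b : R => b <= a.
Lemma ge_tr : transitive ge. Proof. by move=> a b c /= h1 h2; exact: le_trans h2 h1. Qed.
Lemma ge_refl : reflexive ge. Proof. by move=> a; rewrite /ge. Qed.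
Lemma ge_tot : total ge. Proof. by move=> a b; rewrite /ge le_total. Qed.

Lemma count_lb (s : seq R) j : sorted ge s -> (j < size s)%N ->
  (j.+1 <= count (fun a : R => (nth 0 s j <= a)%R) s)%N.
Proof.
move=> ss js.
set P := (fun a : R => (nth 0 s j <= a)%R).
have -> : count P s = (count P (take j.+1 s) + count P (drop j.+1 s))%N by rewrite -count_cat cat_take_drop.
have H : count P (take j.+1 s) = size (take j.+1 s).
  apply/eqP; rewrite -all_count; apply/allP => x /(nthP 0) [i Hi <-].
  have Hs := size_take j.+1 s.
  have Hi' : (i <= j)%N /\ (i < size s)%N.
    move: Hi; rewrite Hs; case: ifP => H1 H2; lia.
  case: Hi' => Hi1 Hi2; rewrite nth_take; last lia.
  exact: (sorted_leq_nth ge_tr ge_refl 0 ss) => //; rewrite inE; lia.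
rewrite H size_take; case: ifP => _; lia.
Qed.

Lemma nth_lb (s : seq R) j v : sorted ge s ->
  (j.+1 <= count (fun a : R => (v <= a)%R) s)%N -> v <= nth 0 s j.
Proof.
move=> ss hc; rewrite leNgt; apply/negP => hlt.
move: hc; rewrite -(cat_take_drop j s) count_cat.
have -> : count (fun a : R => (v <= a)%R) (drop j s) = 0%N.
  apply/eqP; rewrite -leqn0 leqNgt -has_count; apply/hasP => -[x /(nthP 0) [i Hi <-]].
  rewrite size_drop in Hi; rewrite nth_drop => hv.
  have : nth 0 s (j + i) <= nth 0 s j.
    apply: (sorted_leq_nth ge_tr ge_refl 0 ss); rewrite ?inE; move: Hi; set m := size s; clear; lia.
  move=> h; move: (le_lt_trans h hlt); rewrite ltNge hv //.
rewrite addn0 => h; have := count_size (fun a : R => (v <= a)%R) (take j s).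
rewrite size_take; set m := size s; case: ifP => H1 H2; lia.
Qed.

Lemma Qk_mono p k (y z : 'cV[R]_p) : (1 <= k <= p)%N ->
  (forall i, y i 0 <= z i 0) -> Qk k y <= Qk k z.
Proof.
move=> /andP[k1 kp] yz; rewrite /Qk.
apply: nth_lb; first by move: (sort_sorted ge_tot [seq z i 0 | i <- enum (ordinal p)]). 
rewrite count_sort.
have hs : (k.-1 < size (sort ge [seq (y i 0)%R | i <- enum (ordinal p)]))%N.
  by rewrite size_sort size_map size_enum_ord; lia.
have h := count_lb _ _ (sort_sorted ge_tot [seq y i 0 | i <- enum (ordinal p)]) hs.
apply: leq_trans h _.
rewrite count_sort !count_map; apply: sub_count => i /=.
by move=> h; apply: le_trans h (yz i).
Qed.

Lemma Qk_ge0 p k (y : 'cV[R]_p) : (forall i, 0 <= y i 0) -> 0 <= Qk k y.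
Proof.
move=> hy; rewrite /Qk.
set s := sort _ _.
case: (ltnP k.-1 (size s)) => h; last by rewrite nth_default.
have : nth 0 s k.-1 \in s by apply: mem_nth.
rewrite mem_sort => /mapP [i _ ->]; exact: hy.
Qed.
End S.

Theorem theorem5 (R : realFieldType) (p n : nat) (A : 'M[R]_(p, n)) (k : nat)
  (xt : 'cV[R]_n) :
  (forall i j, 0 <= A i j) -> (1 <= k <= p)%N -> is01 xt ->
  (forall x : 'cV[R]_n, is01 x ->
     Qk k (A *m x) >=
     Qk k (A *m xt) * (\sum_(i < n) xt i 0 * x i 0 - \sum_(i < n) xt i 0 + 1))
  /\
  Qk k (A *m xt) =
     Qk k (A *m xt) * (\sum_(i < n) xt i 0 * xt i 0 - \sum_(i < n) xt i 0 + 1).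
Proof.
move=> A0 hk hxt.
have pos : forall x : 'cV[R]_n, is01 x -> forall i, 0 <= (A *m x) i 0.
  move=> x hx i; rewrite mxE; apply: sumr_ge0 => j _; apply: mulr_ge0 => //.
  by case: (hx j) => ->.
split; last first.
  have -> : \sum_(i < n) xt i 0 * xt i 0 = \sum_(i < n) xt i 0.
    by apply: eq_bigr => i _; case: (hxt i) => ->; rewrite ?mulr0 ?mulr1.
  by rewrite subrr add0r mulr1.
move=> x hx.
have E : \sum_(i < n) xt i 0 * x i 0 - \sum_(i < n) xt i 0 + 1 =
         1 - \sum_(i < n) xt i 0 * (1 - x i 0).
  have -> : \sum_(i < n) xt i 0 * (1 - x i 0) =
     \sum_(i < n) xt i 0 - \sum_(i < n) xt i 0 * x i 0.
    by rewrite -sumrB; apply: eq_bigr => i _; rewrite mulrBr mulr1.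
  lra.
rewrite E.
have [H|H] := boolP [forall i : 'I_n, xt i 0 * (1 - x i 0) == 0].
  rewrite big1 ?subr0 ?mulr1; last by move=> i _; apply/eqP; move/forallP: H; apply.
  apply: Qk_mono => // i; rewrite !mxE; apply: ler_sum => j _.
  apply: ler_wpM2l => //.
  move/forallP: H => /(_ j) /eqP.
  by case: (hxt j) => ->; case: (hx j) => -> //; rewrite ?subrr ?mulr0 ?subr0 ?mul1r ?lexx //; lra.
move/forallPn: H => [i Hi].
have t1 : xt i 0 * (1 - x i 0) = 1.
  by move: Hi; case: (hxt i) => ->; case: (hx i) => ->; rewrite ?subrr ?mulr0 ?subr0 ?mul1r ?mul0r ?eqxx.
have ge1 : 1 <= \sum_(j < n) xt j 0 * (1 - x j 0).
  rewrite (bigD1 i) //= t1 lerDl; apply: sumr_ge0 => j _.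
  by case: (hxt j) => ->; case: (hx j) => ->; rewrite ?subrr ?mulr0 ?subr0 ?mul1r ?mul0r.
apply: (@le_trans _ _ 0); last exact: Qk_ge0 (pos x hx).
apply: mulr_ge0_le0; first exact: Qk_ge0 (pos xt hxt).
lra.
Qed.
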